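(* In every $n$-resource selection game $G$, the set $D_G$ is nonempty, $P_G\ne\emptyset$, and $h_G\in\mathbb{R}$ is well defined.
   Context: An $n$-resource selection game is $G=\bigl((f_j)_{j=1}^n;(\mu^{R})_{\emptyset\ne R\subseteq[n]}\bigr)$ with each $f_j:[0,\infty)\to\mathbb{R}$ nondecreasing and each $\mu^R\ge0$. For nondecreasing $g_1,\ldots,g_m:[0,\infty)\to\mathbb{R}\cup\{\mathrm{undefined}\}$, $\mathrm{eq}(g_1,\ldots,g_m)(\mu)$ equals $g_1(\mu_1)$ if there exist $\mu_1,\ldots,\mu_m\ge0$ with $\sum\mu_j=\mu$ and $g_1(\mu_1)=\cdots=g_m(\mu_m)\in\mathbb{R}$, and $\mathrm{undefined}$ otherwise (well defined). For nonempty $S\subseteq[n]$: $E_G(S)=\mathrm{eq}(f_k:k\in S)\bigl(\sum_{\emptyset\ne R\subseteq S}\mu^R\bigr)$; $M_G(S)$ is the set of nonempty $S'\subseteq S$ such that for every $0\le\mu\le\sum_{R\subseteq S,\,R\cap S'\ne\emptyset}\mu^R$, $\mathrm{eq}(f_k:k\in S')(\mu)\ne E_G(S)$ (where $\mathrm{undefined}$ counts as different from every real); $D_G=\{S:\ E_G(S)\in\mathbb{R}\text{ and }M_G(S)=\emptyset\}$; $h_G=\max_{S\in D_G}E_G(S)$; $P_G=\bigcup\{S\in D_G: E_G(S)=h_G\}$. *)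

(* Defs.v *)
From mathcomp Require Import all_boot.
From Stdlib Require Import Reals ClassicalEpsilon.

Set Implicit Arguments.
Unset Strict Implicit.
Unset Printing Implicit Defensive.

Local Open Scope R_scope.

(* An n-resource selection game: cost functions f_j (only their values on
   [0,oo) matter) and masses mu^R indexed by subsets R of [n] = 'I_n
   (mu set0 is never used). *)
Record game (n : nat) := Game {
  cost : 'I_n -> R -> R;
  mass : {set 'I_n} -> R
}.

Definition valid_game n (G : game n) : Prop :=
  (forall j x y, 0 <= x -> x <= y -> cost G j x <= cost G j y) /\
  (forall Rs : {set 'I_n}, Rs != set0 -> 0 <= mass G Rs).

Definition eq_at n (f : 'I_n -> R -> R) (S : {set 'I_n}) (mu c : R) : Prop :=
  exists x : 'I_n -> R,
    (forall k, k \in S -> 0 <= x k) /\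
    \big[Rplus/0]_(k in S) x k = mu /\
    (forall k, k \in S -> f k (x k) = c).

(* eq as a partial function: Some c, or None for "undefined"
   (well defined, as stated in the paper). *)
Definition eqf n (f : 'I_n -> R -> R) (S : {set 'I_n}) (mu : R) : option R :=
  match excluded_middle_informative (exists c, eq_at f S mu c) with
  | left h => Some (proj1_sig (constructive_indefinite_description _ h))
  | right _ => None
  end.

Definition total_mass n (G : game n) (S : {set 'I_n}) : R :=
  \big[Rplus/0]_(Rs : {set 'I_n} | (Rs != set0) && (Rs \subset S)) mass G Rs.

Definition meet_mass n (G : game n) (S S' : {set 'I_n}) : R :=
  \big[Rplus/0]_(Rs : {set 'I_n} | (Rs \subset S) && (Rs :&: S' != set0)) mass G Rs.

Definition E_G n (G : game n) (S : {set 'I_n}) : option R :=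
  eqf (cost G) S (total_mass G S).

Definition in_M_G n (G : game n) (S S' : {set 'I_n}) : Prop :=
  S' != set0 /\ S' \subset S /\
  forall mu, 0 <= mu -> mu <= meet_mass G S S' ->
    eqf (cost G) S' mu <> E_G G S.

Definition in_D_G n (G : game n) (S : {set 'I_n}) : Prop :=
  S != set0 /\ (exists e, E_G G S = Some e) /\ (forall S', ~ in_M_G G S S').

Definition is_h_G n (G : game n) (h : R) : Prop :=
  (exists S, in_D_G G S /\ E_G G S = Some h) /\
  (forall S e, in_D_G G S -> E_G G S = Some e -> e <= h).

Definition in_P_G n (G : game n) (h : R) (j : 'I_n) : Prop :=
  exists S, in_D_G G S /\ E_G G S = Some h /\ j \in S.

(* Main.v *)
Require Import Defs.
From mathcomp Require Import all_boot.
From Stdlib Require Import Reals Classical ClassicalEpsilon.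

Local Open Scope R_scope.

Lemma max_list (T : eqType) (P : T -> Prop) (v : T -> R) (l : seq T) :
  (exists x, x \in l /\ P x) ->
  exists x, x \in l /\ P x /\ forall y, y \in l -> P y -> v y <= v x.
Proof.
elim: l => [|a l IH]; first by case=> x [].
move=> [x0 [x0l Px0]].
case: (classic (exists x, x \in l /\ P x)) => [H|H].
- have [m [ml [Pm Hm]]] := IH H.
  case: (classic (P a /\ v m < v a)) => [[Pa lt]|nb].
  + exists a; split; first by rewrite inE eqxx.
    split=> // y; rewrite inE => /orP [/eqP -> | yl] Py; first by apply: Rle_refl.
    apply: Rle_trans (Hm y yl Py) _; apply: Rlt_le.
    done.
  + exists m; split; first by rewrite inE ml orbT.
    split=> // y; rewrite inE => /orP [/eqP -> | yl] Py; last exact: Hm.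
    apply: Rnot_lt_le => lt; apply: nb; by [].
- have Pa : P a.
    move: x0l; rewrite inE => /orP [/eqP <- | x0l] //.
    by exfalso; apply: H; exists x0.
  exists a; split; first by rewrite inE eqxx.
  split=> // y; rewrite inE => /orP [/eqP -> | yl] Py; first by apply: Rle_refl.
  by exfalso; apply: H; exists y.
Qed.

Lemma tm_ge0 n (G : game n) S : valid_game G -> 0 <= total_mass G S.
Proof.
move=> [_ Hm]; rewrite /total_mass.
apply: (big_ind (fun x => 0 <= x)); first exact: Rle_refl.
  by move=> x y; apply: Rplus_le_le_0_compat.
by move=> Rs /andP [H _]; apply: Hm.
Qed.

Lemma single_D n (G : game n) (j : 'I_n) : valid_game G -> in_D_G G [set j].
Proof.
move=> V; split; first by apply/set0Pn; exists j; rewrite inE.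
split.
  rewrite /E_G /eqf.
  case: excluded_middle_informative => [h|h]; first by eexists.
  exfalso; apply: h; exists (cost G j (total_mass G [set j])).
  exists (fun _ => total_mass G [set j]); split.
    by move=> k _; apply: tm_ge0.
  split; first by rewrite big_set1E Rplus_0_r.
  by move=> k; rewrite inE => /eqP ->.
move=> S' [S'0 [S'sub H]].
have eS : S' = [set j].
  by move: S'sub; rewrite subset1 => /orP [/eqP -> | /eqP e] //; rewrite e eqxx in S'0.
subst S'.
have em : meet_mass G [set j] [set j] = total_mass G [set j].
  rewrite /meet_mass /total_mass; apply: eq_bigl => Rs.
  case sub: (Rs \subset [set j]); last by rewrite andbF.
  by rewrite (setIidPl sub) andbT.
apply: (H (total_mass G [set j])); first exact: tm_ge0.
  by rewrite em; apply: Rle_refl.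
by [].
Qed.

Local Close Scope R_scope.

Theorem mainTheorem13 (n : nat) (G : game n) :
  (0 < n)%N -> valid_game G ->
  (exists S, in_D_G G S) /\
  (exists h : R, is_h_G G h /\ exists j, in_P_G G h j).
Proof.
move=> n0 V.
pose j := Ordinal n0.
have D1 := @single_D n G j V.
split; first by exists [set j].
pose v S := match E_G G S with Some e => e | None => 0%R end.
have [m [_ [Dm Hm]]] := @max_list _ (in_D_G G) v (enum {set 'I_n})
   (ex_intro _ [set j] (conj (mem_enum _ _) D1)).
have Dm' := Dm; case: Dm' => [m0 [[e Em] _]].
exists e; split.
  split; first by exists m.
  move=> S e' DS ES.
  have := Hm S (mem_enum _ _) DS; by rewrite /v ES Em.
have [k km] := set0Pn _ m0.
by exists k, m.
Qed.
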